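(* For every integer $d \geq 2$, $$\overline{\bigcup_{s\geq 1}\mathsf U_{d,s}}=\mathsf B_d,$$ where the closure is taken in $\mathbb R^{d\times d}$.
   Context: $\mathsf B_d$ denotes the set of $d\times d$ bistochastic matrices (real matrices with non-negative entries whose rows and columns each sum to $1$). For integers $d\ge 2$, $s\ge 1$, a matrix $U\in\mathcal U(ds)$ (the group of $ds\times ds$ complex unitary matrices) is viewed as a $d\times d$ block matrix with blocks $U_{ij}\in M_s(\mathbb C)$, $i,j\in\{1,\dots,d\}$. Define $\phi_{d,s}(U)=\big(\tfrac1s\|U_{ij}\|_F^2\big)_{i,j=1}^d$, where $\|X\|_F=\operatorname{Tr}(XX^* )^{1/2}$ is the Frobenius norm, and $\mathsf U_{d,s}:=\phi_{d,s}(\mathcal U(ds))$ (the generalized unistochastic matrices). *)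

(* Defs.v *)
From HB Require Import structures.
From mathcomp Require Import all_boot all_order all_algebra.
From mathcomp Require Import all_classical all_reals all_analysis.
From mathcomp Require Import complex.

Set Implicit Arguments.
Unset Strict Implicit.
Unset Printing Implicit Defensive.

Import Order.TTheory GRing.Theory Num.Theory.
Import numFieldTopology.Exports.
Local Open Scope ring_scope.
Local Open Scope classical_set_scope.

Definition bistochastic (R : realType) (d : nat) : set 'M[R]_d :=
  [set B | (forall i j, 0 <= B i j)
         /\ (forall i, \sum_(j < d) B i j = 1)
         /\ (forall j, \sum_(i < d) B i j = 1)].

Definition adjmx (R : realType) m n (A : 'M[R[i]]_(m, n)) : 'M[R[i]]_(n, m) :=
  (map_mx (@conjc R) A)^T.

Definition unitary (R : realType) n (U : 'M[R[i]]_n) : Prop :=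
  U *m adjmx U = 1%:M /\ adjmx U *m U = 1%:M.

Definition sqmod (R : realType) (z : R[i]) : R :=
  (complex.Re z) ^+ 2 + (complex.Im z) ^+ 2.

(** The (i,j) block of size s x s of a ds x ds matrix: rows/columns of block i
    are indexed by mxvec_index i a = i * s + a, a < s. *)
Definition blockmx (T : Type) (d s : nat) (U : 'M[T]_(d * s)) (i j : 'I_d)
  : 'M[T]_s :=
  \matrix_(a < s, b < s) U (mxvec_index i a) (mxvec_index j b).

Definition frob2 (R : realType) s (X : 'M[R[i]]_s) : R :=
  \sum_(a < s) \sum_(b < s) sqmod (X a b).

Definition phi (R : realType) (d s : nat) (U : 'M[R[i]]_(d * s)) : 'M[R]_d :=
  \matrix_(i < d, j < d) (s%:R^-1 * frob2 (blockmx U i j)).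

Definition gen_unistochastic (R : realType) (d s : nat) : set 'M[R]_d :=
  [set B | exists U : 'M[R[i]]_(d * s), unitary U /\ @phi R d s U = B].

Definition gen_unistochastic_all (R : realType) (d : nat) : set 'M[R]_d :=
  \bigcup_(s in [set s : nat | (0 < s)%N]) @gen_unistochastic R d s.

(* Main.v *)
Require Import Defs.
From HB Require Import structures.
From mathcomp Require Import all_boot all_order all_algebra all_fingroup.
From mathcomp Require Import all_classical all_reals all_analysis.
From mathcomp Require Import complex lra.
Import numFieldTopology.Exports.
Import Order.TTheory GRing.Theory Num.Theory.
Local Open Scope ring_scope.
Local Open Scope classical_set_scope.

Section A.
Variable R : realType.

Lemma sqmod_ge0 (z : R[i]) : 0 <= sqmod z.
Proof. by rewrite /sqmod addr_ge0 // sqr_ge0. Qed.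

Lemma Re_sum I (r : seq I) (P : pred I) (F : I -> R[i]) :
  complex.Re (\sum_(k <- r | P k) F k) = \sum_(k <- r | P k) complex.Re (F k).
Proof. by apply: (big_morph (@complex.Re R)) => // -[a b] [c d]. Qed.

Lemma mulcJ_Re (z : R[i]) : complex.Re (z * conjc z) = sqmod z.
Proof. by case: z => a b /=; rewrite /sqmod mulrN opprK !expr2. Qed.

Lemma mulJc_Re (z : R[i]) : complex.Re (conjc z * z) = sqmod z.
Proof. by case: z => a b /=; rewrite /sqmod mulNr opprK !expr2. Qed.

Lemma sum_mxvec d s (F : 'I_(d * s) -> R) :
  \sum_(j < d) \sum_(b < s) F (mxvec_index j b) = \sum_c F c.
Proof.
rewrite (reindex (uncurry (@mxvec_index d s))) /=; last first.
  by have [g h1 h2] := curry_mxvec_bij d s; exists g => x _; [apply: h1|apply: h2].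
by rewrite pair_big /=; apply: eq_bigr => -[].
Qed.

Lemma unitary_row n (U : 'M[R[i]]_n) r : unitary U -> \sum_c sqmod (U r c) = 1.
Proof.
move=> [H _]; have /(congr1 (fun M : 'M[R[i]]_n => complex.Re (M r r))) := H.
rewrite !mxE eqxx Re_sum /= => <-; apply: eq_bigr => c _.
by rewrite /adjmx !mxE mulcJ_Re.
Qed.

Lemma unitary_col n (U : 'M[R[i]]_n) c : unitary U -> \sum_r sqmod (U r c) = 1.
Proof.
move=> [_ H]; have /(congr1 (fun M : 'M[R[i]]_n => complex.Re (M c c))) := H.
rewrite !mxE eqxx Re_sum /= => <-; apply: eq_bigr => r _.
by rewrite /adjmx !mxE mulJc_Re.
Qed.

Lemma phi_bist d s (U : 'M[R[i]]_(d * s)) : (0 < s)%N -> unitary U ->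
  bistochastic (phi U).
Proof.
move=> s0 hU; have sne : s%:R != 0 :> R by rewrite pnatr_eq0 -lt0n.
split; [|split].
- move=> i j; rewrite mxE mulr_ge0 ?invr_ge0 ?ler0n //.
  by apply: sumr_ge0 => a _; apply: sumr_ge0 => b _; apply: sqmod_ge0.
- move=> i; under eq_bigr do rewrite mxE.
  rewrite -mulr_sumr; apply: (canLR (mulKf sne)); rewrite mulr1.
  rewrite /frob2 exchange_big /=.
  transitivity (\sum_(a < s) (1 : R)); last by rewrite sumr_const card_ord.
  apply: eq_bigr => a _; rewrite -(@unitary_row _ U (mxvec_index i a) hU) -sum_mxvec.
  by apply: eq_bigr => j _; apply: eq_bigr => b _; rewrite mxE.
- move=> j; under eq_bigr do rewrite mxE.
  rewrite -mulr_sumr; apply: (canLR (mulKf sne)); rewrite mulr1.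
  rewrite /frob2.
  transitivity (\sum_(b < s) (1 : R)); last by rewrite sumr_const card_ord.
  under eq_bigr do rewrite exchange_big /=.
  rewrite exchange_big /=; apply: eq_bigr => b _.
  rewrite -(@unitary_col _ U (mxvec_index j b) hU) -sum_mxvec.
  by apply: eq_bigr => i _; apply: eq_bigr => a _; rewrite mxE.
Qed.
End A.
Lemma sum_mxvecN d s (F : 'I_(d * s) -> nat) :
  (\sum_(j < d) \sum_(b < s) F (mxvec_index j b) = \sum_c F c)%N.
Proof.
rewrite (reindex (uncurry (@mxvec_index d s))) /=; last first.
  by have [g h1 h2] := curry_mxvec_bij d s; exists g => x _; [apply: h1|apply: h2].
by rewrite pair_big /=; apply: eq_bigr => -[].
Qed.

Lemma count_enumN (T : finType) (P : pred T) :
  count P (enum T) = (\sum_(k : T) P k)%N.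
Proof.
rewrite -sum1_count big_enum_cond /= big_mkcond /=.
by apply: eq_bigr => k _; case: (P k).
Qed.

Lemma count_FenumN (T : finType) (P : pred T) :
  count P (Finite.enum T) = (\sum_(k : T) P k)%N.
Proof. by rewrite -enumT count_enumN. Qed.

Lemma count_nthN (T : eqType) (x0 : T) (l : seq T) (P : pred T) :
  count P l = (\sum_(a < size l) P (nth x0 l a))%N.
Proof.
rewrite -sum1_count (big_nth x0) big_mkcond /= big_mkord.
by apply: eq_bigr => k _; case: (P _).
Qed.

Definition mxinv {d s} (k : 'I_(d * s)) : 'I_d * 'I_s :=
  enum_val (cast_ord (esym (mxvec_cast d s)) k).

Lemma mxinvK d s i a : mxinv (@mxvec_index d s i a) = (i, a).
Proof. by rewrite /mxinv /mxvec_index cast_ordK enum_rankK. Qed.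

Lemma mxvec_index_inj d s i a j b :
  (@mxvec_index d s i a == mxvec_index j b) = ((i, a) == (j, b)).
Proof.
apply/eqP/eqP => [h|[-> ->]] //.
by rewrite -mxinvK h mxinvK.
Qed.

Section C.
Variable R : realType.

Lemma construct d s (K : 'I_d -> 'I_d -> nat) :
  (forall i, \sum_j K i j = s)%N -> (forall j, \sum_i K i j = s)%N ->
  exists U : 'M[R[i]]_(d * s), unitary U /\
    phi U = \matrix_(i, j) (s%:R^-1 * (K i j)%:R).
Proof.
move=> Hr Hc.
pose lab (i : 'I_d) := flatten [seq nseq (K i j) j | j <- enum 'I_d].
have cnt i P : count P (lab i) = (\sum_j P j * K i j)%N.
  rewrite count_flatten sumnE big_map.
  rewrite big_map big_enum /=.
  by apply: eq_bigr => j _; rewrite count_nseq.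
have szl i : size (lab i) = s.
  by rewrite -(count_predT (lab i)) cnt -(Hr i); apply: eq_bigr => j _; rewrite mul1n.
pose f (k : 'I_(d * s)) := nth (mxinv k).1 (lab (mxinv k).1) (mxinv k).2.
pose g (k : 'I_(d * s)) := (mxinv k).1.
have pe : perm_eq [tuple f k | k < d * s] [tuple g k | k < d * s].
  apply/seq.permP => P.
  rewrite /= !count_map !count_FenumN -!sum_mxvecN.
  transitivity (\sum_(j < d) P j * s)%N; last first.
    apply: eq_bigr => i _; rewrite /g.
    under eq_bigr do rewrite /= mxinvK /=.
    by rewrite sum_nat_const card_ord mulnC.
  transitivity (\sum_(i < d) \sum_j P j * K i j)%N; last first.
    by rewrite exchange_big; apply: eq_bigr => j _; rewrite -big_distrr /= Hc.
  apply: eq_bigr => i _; rewrite -cnt (@count_nthN _ i).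
  under eq_bigr do rewrite /= /f mxinvK /=.
  move: (lab i) (szl i) => l szl'.
  by rewrite szl'.
have [p Hp] := tuple_permP pe.
have fg k : f k = g (p k).
  have := congr1 (fun t : (d * s).-tuple 'I_d => tnth t k) (val_inj Hp).
  by rewrite !tnth_mktuple.
exists (perm_mx p); split.
  have adj : adjmx (perm_mx p : 'M[R[i]]_(d * s)) = perm_mx p^-1.
    by rewrite /adjmx map_perm_mx tr_perm_mx.
  rewrite /unitary adj -!perm_mxM mulgV mulVg perm_mx1.
  by [].
apply/matrixP => i j; rewrite !mxE; congr (_ * _).
rewrite /frob2.
have -> : (K i j)%:R = \sum_(a < s) ((f (mxvec_index i a) == j)%:R : R).
  rewrite -natr_sum; congr (_%:R).
  have := cnt i (pred1 j); rewrite (bigD1 j) //= eqxx mul1n big1 ?addn0; last first.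
    by move=> k /negPf ->.
  move=> <-; rewrite (@count_nthN _ i).
  under [RHS]eq_bigr do rewrite /f mxinvK /=.
  move: (lab i) (szl i) => l szl'.
  by rewrite szl'.
have sq (b : bool) : sqmod ((b%:R : R[i])) = (b%:R : R).
  by case: b; rewrite /sqmod /= ?expr0n /= ?expr1n ?addr0.
apply: eq_bigr => a _; rewrite fg /g.
under eq_bigr do rewrite !mxE sq.
move: (p (mxvec_index i a)) => k; case: (mxvec_indexP k) => j' b'.
rewrite mxinvK /=.
under eq_bigr do rewrite mxvec_index_inj.
have [->|ne] := eqVneq j' j.
  rewrite (bigD1 b') //= eqxx big1 ?addr0 // => b /negPf nb.
  by rewrite xpair_eqE eqxx eq_sym nb.
by rewrite big1 // => b _; rewrite xpair_eqE (negPf ne).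
Qed.
End C.
Section D.
Variable R : realType.

Lemma sum_recr n (F : 'I_n.+1 -> R) :
  \sum_i F i = \sum_(i < n) F (widen_ord (leqnSn n) i) + F ord_max.
Proof. by rewrite big_ord_recr. Qed.

Lemma sumN_recr n (F : 'I_n.+1 -> nat) :
  (\sum_i F i = \sum_(i < n) F (widen_ord (leqnSn n) i) + F ord_max)%N.
Proof. by rewrite big_ord_recr. Qed.

Lemma rounding n s (r : 'I_n.+1 -> 'I_n.+1 -> R) :
  (forall i j, 0 <= r i j) ->
  (forall i, \sum_j r i j = s%:R) -> (forall j, \sum_i r i j = s%:R) ->
  (n * n)%:R <= r ord_max ord_max ->
  exists K : 'I_n.+1 -> 'I_n.+1 -> nat,
    [/\ (forall i, \sum_j K i j = s)%N, (forall j, \sum_i K i j = s)%N &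
        forall i j, `|(K i j)%:R - r i j| <= (n * n)%:R].
Proof.
move=> r0 rr rc rmax.
pose fl i j := Num.truncn (r i j).
pose e i j := r i j - (fl i j)%:R.
have e01 i j : 0 <= e i j < 1.
  have /andP[h1 h2] := truncn_itv (r0 i j).
  rewrite -natr1 in h2; rewrite /e /fl; apply/andP; split; lra.
have flr i j : (fl i j)%:R = r i j - e i j by rewrite /e opprB addrC subrK.
pose Kr i := (s - \sum_(j < n) fl i (widen_ord (leqnSn n) j))%N.
pose Kc j := (s - \sum_(i < n) fl (widen_ord (leqnSn n) i) j)%N.
pose E := \sum_(i < n) \sum_(j < n) e (widen_ord (leqnSn n) i) (widen_ord (leqnSn n) j).
have E0 : 0 <= E by apply: sumr_ge0 => i _; apply: sumr_ge0 => j _; case/andP: (e01 (widen_ord (leqnSn n) i) (widen_ord (leqnSn n) j)).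
have En : E <= (n * n)%:R.
  apply: (le_trans (y := \sum_(i<n) \sum_(j<n) (1:R))).
    apply: ler_sum => i _; apply: ler_sum => j _.
    by case/andP: (e01 (widen_ord (leqnSn n) i) (widen_ord (leqnSn n) j)) => _ /ltW.
  by rewrite !sumr_const !card_ord natrM mulr_natr.
have Krle i : (\sum_(j < n) fl i (widen_ord (leqnSn n) j) <= s)%N.
  rewrite -(ler_nat R) natr_sum -(rr i) sum_recr.
  rewrite -[X in X <= _]addr0 lerD //; apply: ler_sum => j _.
  by rewrite flr lerBlDr lerDl; case/andP: (e01 i (widen_ord (leqnSn n) j)).
have Kcle j : (\sum_(i < n) fl (widen_ord (leqnSn n) i) j <= s)%N.
  rewrite -(ler_nat R) natr_sum -(rc j) sum_recr.
  rewrite -[X in X <= _]addr0 lerD //; apply: ler_sum => i _.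
  by rewrite flr lerBlDr lerDl; case/andP: (e01 (widen_ord (leqnSn n) i) j).
have KrE i : (Kr i)%:R = r i ord_max + \sum_(j < n) e i (widen_ord (leqnSn n) j).
  rewrite natrB // natr_sum -(rr i) sum_recr.
  under eq_bigr do rewrite flr.
  by rewrite sumrB; lra.
have KcE j : (Kc j)%:R = r ord_max j + \sum_(i < n) e (widen_ord (leqnSn n) i) j.
  rewrite natrB // natr_sum -(rc j) sum_recr.
  under eq_bigr do rewrite flr.
  by rewrite sumrB; lra.
have sKc : (\sum_(j < n) Kc (widen_ord (leqnSn n) j))%:R = s%:R - r ord_max ord_max + E :> R.
  rewrite natr_sum; under eq_bigr do rewrite KcE.
  rewrite big_split /= /E exchange_big /=.
  by rewrite -(rr ord_max) sum_recr; lra.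
have cle : (\sum_(j < n) Kc (widen_ord (leqnSn n) j) <= s)%N.
  by rewrite -(ler_nat R) sKc; lra.
pose cr := (s - \sum_(j < n) Kc (widen_ord (leqnSn n) j))%N.
have crE : cr%:R = r ord_max ord_max - E :> R.
  by rewrite natrB // sKc; lra.
pose K i j := if i == ord_max then (if j == ord_max then cr else Kc j)
              else (if j == ord_max then Kr i else fl i j).
have wne k : (widen_ord (leqnSn n) k == ord_max) = false.
  by apply/negbTE; rewrite -val_eqE /= neq_ltn ltn_ord.
exists K; split.
- move=> i; rewrite sumN_recr /K eqxx.
  under eq_bigr do rewrite wne.
  case: ifP => _; first by rewrite subnKC.
  by rewrite subnKC.
- move=> j; rewrite sumN_recr /K eqxx.
  under eq_bigr do rewrite wne.
  case: ifP => _; last by rewrite subnKC.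
  apply/eqP; rewrite -(eqr_nat R) natrD natr_sum crE.
  under eq_bigr do rewrite KrE.
  rewrite big_split /= -(rc ord_max) sum_recr /E.
  apply/eqP; lra.
move=> i j; rewrite /K.
have n2 : (n <= n * n)%N by case: (n) => // n'; rewrite leq_pmulr.
have sum_e_le k : \sum_(j0 < n) e k (widen_ord (leqnSn n) j0) <= (n * n)%:R.
  apply: le_trans (_ : n%:R <= _); last by rewrite ler_nat.
  apply: (le_trans (y := \sum_(j0<n) (1:R))); last by rewrite sumr_const card_ord.
  apply: ler_sum => j0 _.
  by case/andP: (e01 k (widen_ord (leqnSn n) j0)) => _ /ltW.
have sum_e_le' k : \sum_(i0 < n) e (widen_ord (leqnSn n) i0) k <= (n * n)%:R.
  apply: le_trans (_ : n%:R <= _); last by rewrite ler_nat.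
  apply: (le_trans (y := \sum_(j0<n) (1:R))); last by rewrite sumr_const card_ord.
  apply: ler_sum => j0 _.
  by case/andP: (e01 (widen_ord (leqnSn n) j0) k) => _ /ltW.
have sum_e_ge k : 0 <= \sum_(j0 < n) e k (widen_ord (leqnSn n) j0).
  by apply: sumr_ge0 => j0 _; case/andP: (e01 k (widen_ord (leqnSn n) j0)).
have sum_e_ge' k : 0 <= \sum_(i0 < n) e (widen_ord (leqnSn n) i0) k.
  by apply: sumr_ge0 => j0 _; case/andP: (e01 (widen_ord (leqnSn n) j0) k).
case: eqP => [->|/eqP ni]; case: eqP => [->|/eqP nj].
- by rewrite crE ler_norml; lra.
- rewrite KcE ler_norml; have := sum_e_le' j; have := sum_e_ge' j; lra.
- rewrite KrE ler_norml; have := sum_e_le i; have := sum_e_ge i; lra.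
- have n1 : (1 <= n * n)%N.
    have lt : (i < n)%N by rewrite ltn_neqAle -ltnS ltn_ord andbT; move: ni; rewrite -val_eqE.
    have n0 : (0 < n)%N by apply: leq_ltn_trans lt.
    by rewrite muln_gt0 n0.
  rewrite flr ler_norml; have := e01 i j; move/andP=> [h1 h2].
  have : 1 <= (n * n)%:R :> R by rewrite ler1n.
  lra.
Qed.
End D.

Section E.
Variable R : realType.

Lemma bist_le1 d (B : 'M[R]_d) i j : bistochastic B -> B i j <= 1.
Proof.
move=> [h0 [hr _]]; rewrite -(hr i) (bigD1 j) //= lerDl.
by apply: sumr_ge0 => k _; apply: h0.
Qed.

Lemma approx n (B : 'M[R]_n.+1) : bistochastic B -> forall e : R, 0 < e ->
  exists s : nat, (0 < s)%N /\ exists K : 'I_n.+1 -> 'I_n.+1 -> nat,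
    [/\ (forall i, \sum_j K i j = s)%N, (forall j, \sum_i K i j = s)%N &
        forall i j, `|B i j - s%:R^-1 * (K i j)%:R| < e].
Proof.
move=> hB e e0; have [h0 [hr hc]] := hB.
pose t := Num.min (e / 2) 1.
have t0 : 0 < t by rewrite lt_min ltr01 andbT divr_gt0.
have t1 : t <= 1 by rewrite ge_min lexx orbT.
have te : t <= e / 2 by rewrite ge_min lexx.
pose N : R := (n * n)%:R.
have N0 : 0 <= N by rewrite ler0n.
pose M := 2 * N / t.
have M0 : 0 <= M by apply: divr_ge0 (ltW t0); apply: mulr_ge0 => //; lra.
pose s := (Num.truncn M).+1.
have Ms : M < s%:R by have /andP[_ ] := truncn_itv M0.
have s0 : 0 < s%:R :> R by rewrite ltr0n.
have stN : 2 * N < s%:R * t.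
  have : M * t = 2 * N by rewrite /M mulfVK // gt_eqF.
  move=> <-; by rewrite ltr_pM2r.
pose B' i j := (1 - t) * B i j + t * (i == j)%:R.
pose r i j := s%:R * B' i j.
have delta_r (i : 'I_n.+1) : \sum_j ((i == j)%:R : R) = 1.
  rewrite (bigD1 i) //= eqxx big1 ?addr0 // => k /negPf.
  by rewrite eq_sym => ->.
have delta_c (j : 'I_n.+1) : \sum_i ((i == j)%:R : R) = 1.
  rewrite (bigD1 j) //= eqxx big1 ?addr0 // => k /negPf ->.
  by [].
have [K [Kr Kc Kb]] : exists K : 'I_n.+1 -> 'I_n.+1 -> nat,
    [/\ (forall i, \sum_j K i j = s)%N, (forall j, \sum_i K i j = s)%N &
        forall i j, `|(K i j)%:R - r i j| <= N].
  apply: rounding.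
  - move=> i j; rewrite /r /B' mulr_ge0 ?ler0n // addr_ge0 //.
      by rewrite mulr_ge0 ?subr_ge0 ?h0.
    by rewrite mulr_ge0 ?ler0n // ltW.
  - move=> i; rewrite /r -mulr_sumr /B' big_split /= -!mulr_sumr hr delta_r.
    by rewrite mulr1 mulr1 subrK mulr1.
  - move=> j; rewrite /r -mulr_sumr /B' big_split /= -!mulr_sumr hc delta_c.
    by rewrite mulr1 mulr1 subrK mulr1.
  - rewrite /r /B' eqxx mulr1.
    have : 0 <= (1 - t) * B ord_max ord_max by rewrite mulr_ge0 ?subr_ge0 ?h0.
    move: stN; rewrite /N; nra.
exists s; split => //; exists K; split => // i j.
have hB1 := @bist_le1 _ B i j hB; have hB0 := h0 i j.
have e1 : `|B i j - B' i j| <= t.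
  rewrite /B' ler_norml; case: (i == j) => /=; nra.
have e2 : `|B' i j - s%:R^-1 * (K i j)%:R| <= s%:R^-1 * N.
  have -> : B' i j - s%:R^-1 * (K i j)%:R = s%:R^-1 * (r i j - (K i j)%:R).
    by rewrite /r mulrBr mulrA mulVf ?gt_eqF // mul1r.
  rewrite normrM ger0_norm ?invr_ge0 ?ler0n // ler_pM2l ?invr_gt0 //.
  by rewrite distrC Kb.
have e3 : s%:R^-1 * N <= t / 2.
  rewrite -(ler_pM2l s0) mulrA mulfV ?gt_eqF // mul1r; nra.
have := ler_normD (B i j - B' i j) (B' i j - s%:R^-1 * (K i j)%:R).
rewrite addrA subrK => h.
apply: (le_lt_trans h); lra.
Qed.
End E.
Lemma closure_mx (R : realType) d (S : set 'M[R]_d) B :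
  closure S B <-> forall e : R, 0 < e -> exists A, S A /\ forall i j, `|B i j - A i j| < e.
Proof.
split.
  move=> cl e e0.
  have := cl (ball B e) (nbhsx_ballx _ _ e0).
  case=> A [SA bA]; exists A; split => // i j.
  have [_ /(_ i j)] := bA.
  by rewrite /ball /=.
move=> H N /nbhs_ballP [e e0 sN].
have [A [SA HA]] := H e e0.
exists A; split => //; apply: sN.
split => // i j; exact: HA.
Qed.

Lemma sum_close_r (R : realType) d (A B : 'M[R]_d) (e : R) :
  (forall i j, `|B i j - A i j| < e) ->
  forall i, `|\sum_j B i j - \sum_j A i j| <= d%:R * e.
Proof.
move=> H i; rewrite -sumrB; apply: le_trans (ler_norm_sum _ _ _) _.
apply: (le_trans (y := \sum_(j < d) e)); last by rewrite sumr_const card_ord mulr_natl.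
by apply: ler_sum => j _; apply: ltW; apply: H.
Qed.

Lemma sum_close_c (R : realType) d (A B : 'M[R]_d) (e : R) :
  (forall i j, `|B i j - A i j| < e) ->
  forall j, `|\sum_i B i j - \sum_i A i j| <= d%:R * e.
Proof.
move=> H j; rewrite -sumrB; apply: le_trans (ler_norm_sum _ _ _) _.
apply: (le_trans (y := \sum_(i < d) e)); last by rewrite sumr_const card_ord mulr_natl.
by apply: ler_sum => i _; apply: ltW; apply: H.
Qed.

Theorem theorem2p8 (R : realType) (d : nat) :
  (2 <= d)%N ->
  closure (@gen_unistochastic_all R d) = @bistochastic R d.
Proof.
case: d => [//|n] _.
apply/seteqP; split => B.
- move/closure_mx => H.
  have getA (e : R) : 0 < e -> exists A, bistochastic A /\ forall i j, `|B i j - A i j| < e.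
    move=> e0; have [A [[s s0 [U [hU hA]]] HA]] := H e e0.
    exists A; split => //; rewrite -hA; exact: phi_bist.
  have nS : 0 < n.+1%:R :> R by rewrite ltr0n.
  split; [|split].
  + move=> i j; apply/ler_addgt0Pr => e e0.
    have [A [[hA0 _] HA]] := getA e e0.
    have := hA0 i j; have := HA i j; rewrite ltr_norml => /andP[h1 h2]; lra.
  + move=> i; have key : forall e : R, 0 < e -> `|\sum_j B i j - 1| <= e.
      move=> e e0; have [A [[_ [hr _]] HA]] := getA (e / n.+1%:R) (divr_gt0 e0 nS).
      have := @sum_close_r _ _ _ _ _ HA i; rewrite hr mulrC divfK //; exact: lt0r_neq0.
    apply/eqP; rewrite eq_le; apply/andP; split; apply/ler_addgt0Pr => e e0;
      have := key e e0; rewrite ler_norml => /andP[h1 h2]; lra.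
  + move=> j; have key : forall e : R, 0 < e -> `|\sum_i B i j - 1| <= e.
      move=> e e0; have [A [[_ [_ hc]] HA]] := getA (e / n.+1%:R) (divr_gt0 e0 nS).
      have := @sum_close_c _ _ _ _ _ HA j; rewrite hc mulrC divfK //; exact: lt0r_neq0.
    apply/eqP; rewrite eq_le; apply/andP; split; apply/ler_addgt0Pr => e e0;
      have := key e e0; rewrite ler_norml => /andP[h1 h2]; lra.
- move=> hB; apply/closure_mx => e e0.
  have [s [s0 [K [Kr Kc Kb]]]] := @approx R n B hB e e0.
  have [U [hU hphi]] := @construct R _ _ _ Kr Kc.
  exists (\matrix_(i, j) (s%:R^-1 * (K i j)%:R)); split.
    by exists s => //; exists U.
  by move=> i j; rewrite mxE; exact: Kb.
Qed.
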